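(* Let $m\ge1$ and let $W$ be a B-DMC. For every $n\ge1$, $$\sum_{\mathbf s\in\mathcal S_n}I(W_{\mathbf s})=\sum_{\mathbf s\in\mathcal S_{n-1}}I(W_{\mathbf s})+\sum_{\mathbf s\in\mathcal S_{n-m}}I(W_{\mathbf s}),$$ with the convention $\mathcal S_k=\{\emptyset\}$ (the empty string) for $k\le0$. Consequently $\frac{1}{N(n)}\sum_{\mathbf s\in\mathcal S_n}I(W_{\mathbf s})=I(W)$ for all $n\ge1$.
   Context: Fix an integer $m\ge1$. Define integers $N(n)$ by $N(n)=1$ for $1-m\le n\le 0$ and $N(n)=N(n-1)+N(n-m)$ for $n\ge1$; write $\mathbb N_n=\{1,\dots,N(n)\}$ (so $\mathbb N_n=\{1\}$ for $n\le 0$, and $\mathbb N_{n-m}\subseteq\mathbb N_{n-1}$). Define vectors $\mathbf s_n^{(i)}\in\{+,-,\bigstar\}^n$ for $n\ge0$, $i\in\mathbb N_n$, recursively: $\mathbf s_0^{(1)}$ is the empty vector, and for $n\ge1$: $\mathbf s_n^{(j)}=(\mathbf s_{n-1}^{(j)},+)$ and $\mathbf s_n^{(j+N(n-1))}=(\mathbf s_{n-1}^{(j)},-)$ for $j\in\mathbb N_{n-m}$, while $\mathbf s_n^{(j)}=(\mathbf s_{n-1}^{(j)},\bigstar)$ for $j\in\mathbb N_{n-1}\setminus\mathbb N_{n-m}$. Let $\mathcal S_n=\{\mathbf s_n^{(i)}:i\in\mathbb N_n\}$ for $n\ge1$. A B-DMC $V$ is a channel with input alphabet $\{0,1\}$,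 a finite output alphabet $\mathcal Y$ and transition probabilities $V(y|x)$. With base-2 logarithms and uniform input: $I(V)=\sum_{y}\sum_{x}\frac12V(y|x)\log\frac{V(y|x)}{\frac12V(y|0)+\frac12V(y|1)}$, $Z(V)=\sum_y\sqrt{V(y|0)V(y|1)}$, $J(V)=\log\frac{2}{1+Z(V)}$. For B-DMCs $V':\{0,1\}\to\mathcal Y_1$ and $V'':\{0,1\}\to\mathcal Y_2$ define $V'\boxminus V'':\{0,1\}\to\mathcal Y_1\times\mathcal Y_2$ by $(V'\boxminus V'')(y_1,y_2|x_1)=\sum_{x_2\in\{0,1\}}\frac12V'(y_1|x_1\oplus x_2)V''(y_2|x_2)$, and $V'\boxplus V'':\{0,1\}\to\mathcal Y_1\times\mathcal Y_2\times\{0,1\}$ by $(V'\boxplus V'')(y_1,y_2,x_1|x_2)=\frac12V'(y_1|x_1\oplus x_2)V''(y_2|x_2)$. Fix a B-DMC $W$. For every finite string $\mathbf t=(t_1,\dots,t_n)\in\{+,-,\bigstar\}^n$, $n\ge0$, define a B-DMC $W_{\mathbf t}$ recursively: $W_{\emptyset}=W$ for the empty string; for $n\ge1$ let $\mathbf t'=(t_1,\dots,t_{n-1})$ and $\mathbf t''=(t_1,\dots,t_{n-m})$ (the empty string if $n\le m$); then $W_{\mathbf t}=W_{\mathbf t''}\boxplus W_{\mathbf t'}$ if $t_n=+$, $W_{\mathbf t}=W_{\mathbf t''}\boxminus W_{\mathbf t'}$ if $t_n=-$, and $W_{\mathbf t}=W_{\mathbf t'}$ if $t_n=\bigstar$.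 *)

(* Defs.v *)
From mathcomp Require Import all_boot.
From Stdlib Require Import Reals.

Set Implicit Arguments.
Unset Strict Implicit.
Unset Printing Implicit Defensive.

Inductive sign := Plus | Minus | Star.

(* A binary-input channel: finite output alphabet [out] and transition
   probabilities [tr x y] = V(y|x). *)
Record chan := Chan { out : finType; tr : bool -> out -> R }.
Arguments tr : clear implicits.

Definition is_BDMC (V : chan) : Prop :=
  (forall x y, (0 <= tr V x y)%R) /\
  (forall x, \big[Rplus/0%R]_(y : out V) tr V x y = 1%R).

Definition log2 (x : R) : R := (ln x / ln 2)%R.

Definition Icap (V : chan) : R :=
  \big[Rplus/0%R]_(y : out V) \big[Rplus/0%R]_(x : bool)
    (if Req_EM_T (tr V x y) 0%R then 0%R
     else (/2 * tr V x y *
           log2 (tr V x y / (/2 * tr V false y + /2 * tr V true y)))%R).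

Definition box_minus (V' V'' : chan) : chan :=
  @Chan (out V' * out V'')%type
    (fun x1 y => \big[Rplus/0%R]_(x2 : bool)
        (/2 * tr V' (addb x1 x2) y.1 * tr V'' x2 y.2)%R).

Definition box_plus (V' V'' : chan) : chan :=
  @Chan (out V' * out V'' * bool)%type
    (fun x2 y => (/2 * tr V' (addb y.2 x2) y.1.1 * tr V'' x2 y.1.2)%R).

(* N(n); on nat, n - m is truncated, which matches N(k) = 1 for k <= 0.
   Nhist m n = [:: N n; N (n-1); ...; N 0]. *)
Fixpoint Nhist (m n : nat) : seq nat :=
  match n with
  | 0 => [:: 1]
  | n'.+1 => let h := Nhist m n' in (head 1 h + nth 1 h m.-1) :: h
  end.
(* nth 1 (Nhist m n') (m-1) = N(n'-(m-1)) = N(n-m) (default 1 when n - m < 0). *)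

Definition NN (m n : nat) : nat := head 1 (Nhist m n).

(* Shist m n = [:: S_n; S_(n-1); ...; S_0], each S_k listed as
   [:: s_k^(1); ...; s_k^(N k)]; vectors are written t_1..t_k (rcons appends). *)
Fixpoint Shist (m n : nat) : seq (seq (seq sign)) :=
  match n with
  | 0 => [:: [:: [::]]]
  | n'.+1 =>
      let h := Shist m n' in
      let prev := head [::] h in
      let k := NN m (n'.+1 - m) in
      ([seq rcons s Plus | s <- take k prev]
       ++ [seq rcons s Star | s <- drop k prev]
       ++ [seq rcons s Minus | s <- take k prev]) :: h
  end.

(* S_n (for n = 0 this is {empty string}; SS m (n - m) with truncated
   subtraction gives the convention S_k = {empty} for k <= 0). *)
Definition SS (m n : nat) : seq (seq sign) := head [::] (Shist m n).

(* W_t: Whist_rev m W r = [:: W_t; W_(t_1..t_(n-1)); ...; W_empty]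
   where r = rev t. *)
Fixpoint Whist_rev (m : nat) (W : chan) (r : seq sign) : seq chan :=
  match r with
  | [::] => [:: W]
  | a :: r' =>
      let h := Whist_rev m W r' in
      let W' := head W h in
      let W'' := nth W h m.-1 in      (* W_(t''), t'' = t_1..t_(n-m), empty if n <= m *)
      (match a with
       | Plus => box_plus W'' W'
       | Minus => box_minus W'' W'
       | Star => W'
       end) :: h
  end.

Definition Wt (m : nat) (W : chan) (t : seq sign) : chan :=
  head W (Whist_rev m W (rev t)).

Definition sumI (m : nat) (W : chan) (L : seq (seq sign)) : R :=
  \big[Rplus/0%R]_(s <- L) Icap (Wt m W s).

(* Main.v *)
Require Import Defs.
From mathcomp Require Import all_boot.
From Stdlib Require Import Reals.
From HB Require Import structures.
From Stdlib Require Import Lra Lia.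
From mathcomp Require Import zify.

HB.instance Definition _ := Monoid.isComLaw.Build R 0%R Rplus (fun x y z => esym (Rplus_assoc x y z)) Rplus_comm Rplus_0_l.

Local Open Scope R_scope.

Lemma sumD (T : finType) (F G : T -> R) :
  \big[Rplus/0]_(i : T) (F i + G i) = \big[Rplus/0]_(i : T) F i + \big[Rplus/0]_(i : T) G i.
Proof. exact: big_split. Qed.

Lemma sumMl (T : finType) (c : R) (F : T -> R) :
  \big[Rplus/0]_(i : T) (c * F i) = c * \big[Rplus/0]_(i : T) F i.
Proof.
apply: (big_ind2 (fun a b => a = c * b)); first by ring.
  by move=> a b c' d -> ->; ring.
by [].
Qed.

Lemma sumMr (T : finType) (c : R) (F : T -> R) :
  \big[Rplus/0]_(i : T) (F i * c) = \big[Rplus/0]_(i : T) F i * c.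
Proof.
apply: (big_ind2 (fun a b => a = b * c)); first by ring.
  by move=> a b c' d -> ->; ring.
by [].
Qed.

Lemma sum_pair (A B : finType) (F : A * B -> R) :
  \big[Rplus/0]_(y : A * B) F y = \big[Rplus/0]_(a : A) \big[Rplus/0]_(b : B) F (a, b).
Proof. by rewrite pair_big; apply: eq_bigr => -[]. Qed.

Lemma sum_ge0 (T : finType) (F : T -> R) : (forall i, 0 <= F i) -> 0 <= \big[Rplus/0]_(i : T) F i.
Proof. move=> H; apply: (big_ind (fun a => 0 <= a)) => //; [lra | move=> *; lra]. Qed.

Definition g (t : R) := t * ln t.
Definition qq (V : chan) y := (tr V false y + tr V true y) / 2.
Definition phi (V : chan) y := g (tr V false y) + g (tr V true y) - 2 * g (qq V y).
Definition Phi (V : chan) := \big[Rplus/0]_(y : out V) phi V y.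

Lemma gM x y : 0 <= x -> 0 <= y -> g (x * y) = g x * y + x * g y.
Proof.
rewrite /g => hx hy.
case: (Rle_lt_or_eq_dec _ _ hx) => [px|<-]; last by ring.
case: (Rle_lt_or_eq_dec _ _ hy) => [py|<-]; last by ring.
rewrite ln_mult //; ring.
Qed.

Lemma ln2_pos : 0 < ln 2.
Proof. have := ln_lt_2; lra. Qed.

Lemma term_eq t t' : 0 <= t -> 0 <= t' ->
  (if Req_EM_T t 0 then 0 else (/2 * t * log2 (t / (/2 * t + /2 * t'))))
  = (g t - t * ln ((t + t') / 2)) / (2 * ln 2).
Proof.
move=> ht ht'; have l2 := ln2_pos.
destruct (Req_EM_T t 0) as [e|h]; first by simpl; rewrite e /g; field; lra.
simpl.
have pt : 0 < t by lra.
have pq : 0 < (/2 * t + /2 * t') by lra.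
rewrite /log2 /Rdiv ln_mult //; last by apply: Rinv_0_lt_compat.
rewrite ln_Rinv //.
replace (/2 * t + /2 * t') with ((t + t') * / 2) by field.
rewrite /g; field; lra.
Qed.

Lemma term_eq' t t' : 0 <= t -> 0 <= t' ->
  (if Req_EM_T t 0 then 0 else (/2 * t * log2 (t / (/2 * t' + /2 * t))))
  = (g t - t * ln ((t + t') / 2)) / (2 * ln 2).
Proof.
move=> ht ht'; rewrite -term_eq //; by replace (/2 * t' + /2 * t) with (/2 * t + /2 * t') by ring.
Qed.

Lemma Icap_Phi V : (forall x y, 0 <= tr V x y) -> Icap V = Phi V / (2 * ln 2).
Proof.
move=> H; rewrite /Icap /Phi /Rdiv -sumMr; apply: eq_bigr => y _.
rewrite big_bool /= term_eq // term_eq' //.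
have l2 := ln2_pos.
rewrite /phi /qq /g.
rewrite (Rplus_comm (tr V true y) (tr V false y)).
field; lra.
Qed.

Lemma g_hp a b : 0 <= a -> 0 <= b -> g (/2 * a * b) = g (/2) * a * b + /2 * (g a * b + a * g b).
Proof.
move=> ha hb; have h2 : 0 <= /2 by lra.
rewrite gM; last by []; last by apply: Rmult_le_pos.
rewrite gM //; ring.
Qed.

Lemma gH x : 0 <= x -> g (x / 2) = g (/2) * x + /2 * g x.
Proof. move=> hx; rewrite /Rdiv gM //; [ring | lra]. Qed.

Lemma key_alg a0 a1 b0 b1 : 0 <= a0 -> 0 <= a1 -> 0 <= b0 -> 0 <= b1 ->
  g (/ 2 * a1 * b0) +
  g (/ 2 * a0 * b1) -
  2 *
  g
    ((/ 2 * a1 * b0 +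
      / 2 * a0 * b1) /
     2) +
  (g (/ 2 * a0 * b0) +
   g (/ 2 * a1 * b1) -
   2 *
   g
     ((/ 2 * a0 * b0 +
       / 2 * a1 * b1) /
      2)) +
  (g
     (/ 2 * a1 * b1 +
      / 2 * a0 * b0) +
   g
     (/ 2 * a0 * b1 +
      / 2 * a1 * b0) -
   2 *
   g
     ((/ 2 * a1 * b1 +
       / 2 * a0 * b0 +
       (/ 2 * a0 * b1 +
        / 2 * a1 * b0)) /
      2)) =
  (g (a0) + g (a1) -
   2 * g ((a0 + a1) / 2)) *
  ((b0 + b1) / 2) +
  (a0 + a1) / 2 *
  (g (b0) + g (b1) -
   2 * g ((b0 + b1) / 2)).
Proof.
move=> h0 h1 h2 h3.
have p : forall a b, 0 <= a -> 0 <= b -> 0 <= /2 * a * b.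
  by move=> a b ha hb; apply: Rmult_le_pos => //; apply: Rmult_le_pos => //; lra.
replace ((/ 2 * a1 * b1 + / 2 * a0 * b0 + (/ 2 * a0 * b1 + / 2 * a1 * b0)) / 2)
  with (((a0 + a1) / 2) * ((b0 + b1) / 2)) by field.
rewrite (gM ((a0+a1)/2) ((b0+b1)/2)); [|lra|lra].
rewrite (gH _ (Rplus_le_le_0_compat _ _ (p _ _ h1 h2) (p _ _ h0 h3))).
rewrite (gH _ (Rplus_le_le_0_compat _ _ (p _ _ h0 h2) (p _ _ h1 h3))).
rewrite (Rplus_comm (/ 2 * a1 * b0) (/ 2 * a0 * b1)) (Rplus_comm (/ 2 * a0 * b0) (/ 2 * a1 * b1)).
rewrite (g_hp _ _ h1 h2) (g_hp _ _ h0 h3) (g_hp _ _ h0 h2) (g_hp _ _ h1 h3).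
field.
Qed.

Lemma key_pm (V' V'' : chan) y1 y2 :
  (forall x y, 0 <= tr V' x y) -> (forall x y, 0 <= tr V'' x y) ->
  \big[Rplus/0]_(u : bool) phi (box_plus V' V'') (y1, y2, u) + phi (box_minus V' V'') (y1, y2)
  = phi V' y1 * qq V'' y2 + qq V' y1 * phi V'' y2.
Proof.
move=> H1 H2.
rewrite big_bool /phi /qq /= !big_bool /=.
exact: key_alg.
Qed.

Lemma sum_qq (V : chan) : (forall x, \big[Rplus/0]_(y : out V) tr V x y = 1) ->
  \big[Rplus/0]_(y : out V) qq V y = 1.
Proof. move=> S; rewrite /qq /Rdiv sumMr sumD !S; field. Qed.

Lemma Phi_chain (V' V'' : chan) : is_BDMC V' -> is_BDMC V'' ->
  Phi (box_plus V' V'') + Phi (box_minus V' V'') = Phi V' + Phi V''.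
Proof.
move=> [H1 S1] [H2 S2].
rewrite /Phi.
have -> : \big[Rplus/0]_(y : out (box_plus V' V'')) phi (box_plus V' V'') y =
  \big[Rplus/0]_(a : out V') \big[Rplus/0]_(b : out V'') \big[Rplus/0]_(u : bool) phi (box_plus V' V'') (a, b, u).
  rewrite (sum_pair _ _ (fun y : (out V' * out V'') * bool => phi (box_plus V' V'') y)) (sum_pair _ _ (fun y : out V' * out V'' => \big[Rplus/0]_(u : bool) phi (box_plus V' V'') (y, u))).
  by apply: eq_bigr => a _.
have -> : \big[Rplus/0]_(y : out (box_minus V' V'')) phi (box_minus V' V'') y =
  \big[Rplus/0]_(a : out V') \big[Rplus/0]_(b : out V'') phi (box_minus V' V'') (a, b).
  exact: (sum_pair _ _ (fun y : out V' * out V'' => phi (box_minus V' V'') y)).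
rewrite -sumD.
under eq_bigr => a _ do rewrite -sumD.
under eq_bigr => a _ do under eq_bigr => b _ do rewrite key_pm //.
under eq_bigr => a _ do rewrite sumD sumMl sumMl sum_qq //.
rewrite sumD sumMr sumMr sum_qq //; ring.
Qed.

Lemma bdmc_plus (V' V'' : chan) : is_BDMC V' -> is_BDMC V'' -> is_BDMC (box_plus V' V'').
Proof.
move=> [H1 S1] [H2 S2]; split.
  move=> x [[a b] u] /=; apply: Rmult_le_pos => //; apply: Rmult_le_pos => //; lra.
move=> x.
rewrite (sum_pair _ _ (fun y : (out V' * out V'') * bool => tr (box_plus V' V'') x y)).
rewrite (sum_pair _ _ (fun y : out V' * out V'' => \big[Rplus/0]_(u : bool) tr (box_plus V' V'') x (y, u))).
have E : forall a, \big[Rplus/0]_(b : out V'') \big[Rplus/0]_(u : bool) tr (box_plus V' V'') x (a, b, u)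
   = /2 * (tr V' false a + tr V' true a).
  move=> a.
  have -> : \big[Rplus/0]_(b : out V'') \big[Rplus/0]_(u : bool) tr (box_plus V' V'') x (a, b, u)
    = \big[Rplus/0]_(b : out V'') ((/2 * tr V' (addb true x) a + /2 * tr V' (addb false x) a) * tr V'' x b).
    by apply: eq_bigr => b _; rewrite big_bool /=; ring.
  by rewrite sumMl S2; case: x => /=; ring.
under eq_bigr => a _ do rewrite E.
by rewrite sumMl sumD !S1; field.
Qed.

Lemma bdmc_minus (V' V'' : chan) : is_BDMC V' -> is_BDMC V'' -> is_BDMC (box_minus V' V'').
Proof.
move=> [H1 S1] [H2 S2]; split.
  move=> x [a b] /=; rewrite big_bool.
  by apply: Rplus_le_le_0_compat; apply: Rmult_le_pos => //; apply: Rmult_le_pos => //; lra.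
move=> x.
rewrite (sum_pair _ _ (fun y : out V' * out V'' => tr (box_minus V' V'') x y)).
have E : forall a, \big[Rplus/0]_(b : out V'') tr (box_minus V' V'') x (a, b)
   = /2 * (tr V' false a + tr V' true a).
  move=> a.
  have -> : \big[Rplus/0]_(b : out V'') tr (box_minus V' V'') x (a, b)
    = \big[Rplus/0]_(b : out V'') (/2 * tr V' (addb x true) a * tr V'' true b + /2 * tr V' (addb x false) a * tr V'' false b).
    by apply: eq_bigr => b _; rewrite /= big_bool.
  rewrite sumD sumMl sumMl S2 S2; case: x => /=; ring.
under eq_bigr => a _ do rewrite E.
by rewrite sumMl sumD !S1; field.
Qed.

Lemma Icap_chain (V' V'' : chan) : is_BDMC V' -> is_BDMC V'' ->
  Icap (box_plus V' V'') + Icap (box_minus V' V'') = Icap V' + Icap V''.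
Proof.
move=> h1 h2.
have [p _] := bdmc_plus _ _ h1 h2. have [q _] := bdmc_minus _ _ h1 h2.
have E := Phi_chain _ _ h1 h2.
case: h1 => [a1 _]; case: h2 => [a2 _].
rewrite !Icap_Phi //.
have l2 := ln2_pos.
rewrite /Rdiv -!Rmult_plus_distr_r E //.
Qed.
Close Scope R_scope.
Set Implicit Arguments.

Lemma NhistE m n i : nth 1 (Nhist m n) i = NN m (n - i).
Proof.
elim: n i => [|n IH] [|i] //=.
by rewrite nth_nil.
Qed.

Lemma NN_S m n : (1 <= m)%N -> NN m n.+1 = (NN m n + NN m (n.+1 - m))%N.
Proof.
move=> hm; rewrite /NN /=.
rewrite NhistE /NN.
have -> : (n - m.-1 = n.+1 - m)%N by case: m hm => //= m _; lia.
by [].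
Qed.

Lemma NN_mono m k n : (k <= n)%N -> (NN m k <= NN m n)%N.
Proof.
move=> h; elim: n h => [|n IH] h.
  by have -> : k = 0%N by lia.
case: (k == n.+1) /eqP => [->|ne]; first by [].
have := IH ltac:(lia).
have : NN m n.+1 = (NN m n + nth 1 (Nhist m n) m.-1)%N by [].
lia.
Qed.

Lemma SS_S m n : SS m n.+1 =
  let prev := SS m n in let k := NN m (n.+1 - m) in
  [seq rcons s Plus | s <- take k prev]
       ++ [seq rcons s Star | s <- drop k prev]
       ++ [seq rcons s Minus | s <- take k prev].
Proof. by []. Qed.

Lemma all_take_drop {T : Type} {p : pred T} (k : nat) {s : seq T} :
  all p s -> all p (take k s) && all p (drop k s).
Proof. by rewrite -{1}(cat_take_drop k s) all_cat. Qed.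

Lemma all_size_SS m n : all (fun s : seq sign => size s == n) (SS m n).
Proof.
elim: n => [|n IH] //.
rewrite SS_S /= !all_cat !all_map.
have /andP[ht hd] := all_take_drop (NN m (n.+1 - m)) IH.
apply/and3P; split.
- by apply: sub_all ht => s /=; rewrite size_rcons.
- by apply: sub_all hd => s /=; rewrite size_rcons.
- by apply: sub_all ht => s /=; rewrite size_rcons.
Qed.

Lemma size_SS m n : (1 <= m)%N -> size (SS m n) = NN m n.
Proof.
move=> hm; elim: n => [|n IH] //.
rewrite SS_S /= !size_cat !size_map size_drop size_takel IH.
  rewrite NN_S //.
  have := @NN_mono m (n.+1 - m)%N n ltac:(lia).
  lia.
apply: NN_mono; lia.
Qed.

Lemma map_take_size (L : seq (seq sign)) n :
  all (fun s : seq sign => size s == n) L -> map (take n) L = L.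
Proof.
elim: L => [|s L IH] //= /andP[/eqP hs hL].
by rewrite IH // -hs take_size.
Qed.

Lemma map_take_rcons (L : seq (seq sign)) k x :
  all (fun s : seq sign => (k <= size s)%N) L ->
  map (take k) (map (fun s => rcons s x) L) = map (take k) L.
Proof.
elim: L => [|s L IH] //= /andP[hs hL].
by rewrite IH // -cats1 takel_cat.
Qed.

Lemma prefix_SS m k n : (1 <= m)%N -> (k <= n)%N ->
  map (take k) (take (NN m k) (SS m n)) = SS m k.
Proof.
move=> hm; elim: n => [|n IH] hk.
  have -> : k = 0%N by lia.
  by [].
case: (k == n.+1) /eqP => [->|ne].
  rewrite take_oversize; last by rewrite size_SS.
  exact: map_take_size (all_size_SS m n.+1).
have hkn : (k <= n)%N by lia.
rewrite SS_S /= catA takel_cat; last first.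
  rewrite size_cat !size_map -size_cat cat_take_drop size_SS //.
  exact: NN_mono.
rewrite map_take map_cat.
have hall : all (fun s : seq sign => (k <= size s)%N) (SS m n).
  by apply: sub_all (all_size_SS m n) => s /eqP ->.
have /andP[ht hd] := all_take_drop (NN m (n.+1 - m)) hall.
rewrite !map_take_rcons // -map_cat cat_take_drop -map_take IH //.
Qed.

Lemma WhistE m W s i : nth W (Whist_rev m W (rev s)) i = Wt m W (take (size s - i) s).
Proof.
elim/last_ind: s i => [|s a IH] i.
  by case: i => [|i] //=; rewrite nth_nil.
rewrite rev_rcons; case: i => [|i].
  by rewrite subn0 take_size /Wt rev_rcons.
rewrite /= IH size_rcons subSS -cats1 takel_cat //.
exact: leq_subr.
Qed.

Lemma Wt_rcons m W s a : Wt m W (rcons s a) =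
  match a with
  | Plus => box_plus (Wt m W (take (size s - m.-1) s)) (Wt m W s)
  | Minus => box_minus (Wt m W (take (size s - m.-1) s)) (Wt m W s)
  | Star => Wt m W s
  end.
Proof. by rewrite {1}/Wt rev_rcons /= WhistE. Qed.

Lemma bdmc_hist m W : is_BDMC W -> forall r i, is_BDMC (nth W (Whist_rev m W r) i).
Proof.
move=> hW; elim=> [|a r IH] i.
  by case: i => [|[|i]].
case: i => [|i] //=.
have := IH 0%N; rewrite nth0 => h0.
case: a => //.
- exact: bdmc_plus.
- exact: bdmc_minus.
Qed.

Lemma bdmc_Wt m W s : is_BDMC W -> is_BDMC (Wt m W s).
Proof. by move=> hW; have := bdmc_hist m hW (rev s) 0; rewrite nth0. Qed.

Local Open Scope R_scope.

Lemma sum_pm m W k n (L : seq (seq sign)) : is_BDMC W ->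
  all (fun s : seq sign => size s == n) L -> (n - m.-1 = k)%nat ->
  \big[Rplus/0]_(s <- [seq rcons s Plus | s <- L]) Icap (Wt m W s)
  + \big[Rplus/0]_(s <- [seq rcons s Minus | s <- L]) Icap (Wt m W s)
  = \big[Rplus/0]_(s <- [seq take k s | s <- L]) Icap (Wt m W s)
  + \big[Rplus/0]_(s <- L) Icap (Wt m W s).
Proof.
move=> hW hL hk; elim: L hL => [|s L IH] /=; first by rewrite !big_nil.
move=> /andP[/eqP hs hL]; have IH1 := IH hL; rewrite !big_cons.
rewrite !Wt_rcons hs hk.
have := Icap_chain _ _ (bdmc_Wt m (take k s) hW) (bdmc_Wt m s hW).
lra.
Qed.

Lemma part1 m W n : (1 <= m)%nat -> is_BDMC W ->
  sumI m W (SS m n.+1) = sumI m W (SS m n) + sumI m W (SS m (n.+1 - m)).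
Proof.
move=> hm hW.
rewrite /sumI SS_S /= !big_cat /=.
set K := NN m (n.+1 - m).
have hall := all_size_SS m n.
have /andP[ht hd] := all_take_drop K hall.
have E := @sum_pm m W (n.+1 - m)%nat n (take K (SS m n)) hW ht ltac:(case: m hm {K hall ht hd} => // m _; lia).
have eS : \big[Rplus/0]_(i <- [seq rcons s Star | s <- drop K (SS m n)]) Icap (Wt m W i)
   = \big[Rplus/0]_(s <- drop K (SS m n)) Icap (Wt m W s).
  by rewrite big_map; apply: eq_bigr => s _; rewrite Wt_rcons.
have eP : SS m (n.+1 - m) = [seq take (n.+1 - m) s | s <- take K (SS m n)].
  by rewrite /K prefix_SS //; lia.
have eA : \big[Rplus/0]_(s <- SS m n) Icap (Wt m W s) =
  \big[Rplus/0]_(s <- take K (SS m n)) Icap (Wt m W s) + \big[Rplus/0]_(s <- drop K (SS m n)) Icap (Wt m W s).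
  by rewrite -big_cat cat_take_drop.
rewrite eS eP eA; lra.
Qed.

Lemma sumNN m W : (1 <= m)%nat -> is_BDMC W ->
  forall n, sumI m W (SS m n) = INR (NN m n) * Icap W.
Proof.
move=> hm hW.
suff H : forall n k, (k <= n)%nat -> sumI m W (SS m k) = INR (NN m k) * Icap W.
  by move=> n; apply: (H n n); lia.
elim=> [|n IH] k hk.
  have -> : k = 0%nat by lia.
  rewrite /sumI /SS /= big_cons big_nil /=.
  change (Wt m W [::]) with W; ring.
case: (k == n.+1) /eqP => [->|ne]; last by apply: IH; lia.
rewrite part1 // IH // IH; last by lia.
rewrite NN_S // plus_INR; ring.
Qed.

Close Scope R_scope.

Theorem mainTheorem11 (m : nat) (W : chan) :
  (1 <= m)%N -> is_BDMC W ->
  forall n : nat, (1 <= n)%N ->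
    sumI m W (SS m n) = (sumI m W (SS m (n - 1)) + sumI m W (SS m (n - m)))%R
    /\ (/ INR (NN m n) * sumI m W (SS m n) = Icap W)%R.
Proof.
move=> hm hW [|n] hn; first by lia.
split.
  have -> : (n.+1 - 1 = n)%nat by lia.
  exact: part1.
rewrite (sumNN m hm hW).
have hp : (0 < NN m n.+1)%nat by have := @NN_mono m 0 n.+1 ltac:(lia); rewrite /NN /=; lia.
have : INR (NN m n.+1) <> 0%R by apply: not_0_INR; lia.
move=> h; field; exact: h.
Qed.
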